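(* Let $f:\mathbb{R}^n\to\overline{\mathbb{R}}$ be proper lower semicontinuous, $(\bar x,\bar v)\in\operatorname{gph}\partial f$, and $0<\varepsilon_2<\varepsilon_1$. Then: (i) for all $(x,v)\in\operatorname{gph}T_{\varepsilon_2}(\bar x,\bar v)$, $\operatorname{gph}T_{\varepsilon_1-\varepsilon_2}(x,v)\subset\operatorname{gph}T_{\varepsilon_1}(\bar x,\bar v)$; (ii) let $s\in\mathbb{R}$ and suppose $f$ is variationally $s$-convex at $\bar x$ for $\bar v$ with corresponding radius $\varepsilon_1$, i.e. $f(x')\ge f(x)+\langle v,x'-x\rangle+\frac s2\|x'-x\|^2$ for all $(x,v)\in\operatorname{gph}T_{\varepsilon_1}(\bar x,\bar v)$ and $x'\in B(\bar x,\varepsilon_1)$. Then for every $(x,v)\in\operatorname{gph}T_{\varepsilon_2}(\bar x,\bar v)$, $f$ is variationally $s$-convex at $x$ for $v$ with radius $\varepsilon_1-\varepsilon_2$, i.e. $f(x')\ge f(\tilde x)+\langle\tilde v,x'-\tilde x\rangle+\frac s2\|x'-\tilde x\|^2$ for all $(\tilde x,\tilde v)\in\operatorname{gph}T_{\varepsilon_1-\varepsilon_2}(x,v)$ and $x'\in B(x,\varepsilon_1-\varepsilon_2)$.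
   Context: $\partial f$: limiting subdifferential. $B(x,r)$: open ball. For $(x,v)\in\operatorname{gph}\partial f$ and $\varepsilon>0$: $\operatorname{gph}T_\varepsilon(x,v)=\{(\tilde x,\tilde v)\in\operatorname{gph}\partial f:\tilde x\in B(x,\varepsilon),\tilde v\in B(v,\varepsilon),f(\tilde x)<f(x)+\varepsilon\}$ ($f$-attentive $\varepsilon$-localization of $\partial f$ around $(x,v)$). Variational $s$-convexity at $\bar x$ for $\bar v$ is characterized by: $f(\bar x)$ finite, $f$ l.s.c. at $\bar x$, and existence of $\varepsilon>0$ and a neighborhood of $\bar x$ on which the inequality $f(x')\ge f(x)+\langle v,x'-x\rangle+\frac s2\|x'-x\|^2$ holds for all $(x,v)\in\operatorname{gph}T_\varepsilon(\bar x,\bar v)$. *)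

(* Defs.v *)
(* R^n is 'rV[R]_n with the Euclidean
   inner product and norm; f : R^n -> \bar R (extended reals). *)
From HB Require Import structures.
From mathcomp Require Import all_boot all_order all_algebra.
From mathcomp Require Import all_classical all_reals ereal.
Set Implicit Arguments. Unset Strict Implicit. Unset Printing Implicit Defensive.
Import Order.TTheory GRing.Theory Num.Theory.
Local Open Scope ring_scope.
Local Open Scope ereal_scope.

Section Defs.
Variables (R : realType) (n : nat).
Notation V := 'rV[R]_n.

Definition dotp (u w : V) : R := (\sum_(i < n) u ord0 i * w ord0 i)%R.
Definition enorm (u : V) : R := Num.sqrt (dotp u u).

Definition inball (x : V) (r : R) (y : V) : Prop := (enorm (y - x) < r)%R.

Definition proper_fun (f : V -> \bar R) : Prop :=
  (forall x, f x != -oo) /\ (exists x, f x \is a fin_num).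

Definition lsc_at (f : V -> \bar R) (x : V) : Prop :=
  forall a : R, a%:E < f x ->
    exists2 d : R, (0 < d)%R & forall y, inball x d y -> a%:E < f y.
Definition lsc (f : V -> \bar R) : Prop := forall x, lsc_at f x.

(* regular (Frechet) subgradient:
   f(x) finite and liminf_{y->x, y<>x} (f y - f x - <v,y-x>)/|y-x| >= 0 *)
Definition regular_subgrad (f : V -> \bar R) (x v : V) : Prop :=
  f x \is a fin_num /\
  forall e : R, (0 < e)%R ->
    exists2 d : R, (0 < d)%R & forall y, inball x d y ->
      f x + (dotp v (y - x) - e * enorm (y - x))%:E <= f y.

Definition seq_cvg (u : nat -> V) (l : V) : Prop :=
  forall e : R, (0 < e)%R -> exists N, forall k, (N <= k)%N -> (enorm (u k - l) < e)%R.

Definition val_cvg (a : nat -> \bar R) (l : \bar R) : Prop :=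
  forall e : R, (0 < e)%R -> exists N, forall k, (N <= k)%N ->
    l - e%:E < a k /\ a k < l + e%:E.

Definition limiting_subgrad (f : V -> \bar R) (x v : V) : Prop :=
  f x \is a fin_num /\
  exists (xs vs : nat -> V),
    seq_cvg xs x /\ val_cvg (fun k => f (xs k)) (f x) /\ seq_cvg vs v /\
    forall k, regular_subgrad f (xs k) (vs k).

Definition gphT (f : V -> \bar R) (eps : R) (x v : V) (xt vt : V) : Prop :=
  limiting_subgrad f xt vt /\ inball x eps xt /\ inball v eps vt /\
  f xt < f x + eps%:E.

Definition var_convex_radius (f : V -> \bar R) (s : R) (x v : V) (eps : R) : Prop :=
  forall xt vt, gphT f eps x v xt vt -> forall x', inball x eps x' ->
    f xt + (dotp vt (x' - xt) + s / 2 * enorm (x' - xt) ^+ 2)%:E <= f x'.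

End Defs.

(* Main.v *)
Require Import Defs.
From HB Require Import structures.
From mathcomp Require Import all_boot all_order all_algebra.
From mathcomp Require Import all_classical all_reals ereal.
From mathcomp Require Import ring lra.
Import Order.TTheory GRing.Theory Num.Theory.
Local Open Scope ring_scope.

Lemma dotp_ge0 {R : realType} {n} (a : 'rV[R]_n) : 0 <= dotp a a.
Proof. by apply: sumr_ge0 => i _; rewrite -expr2 sqr_ge0. Qed.

Lemma dotp_quad {R : realType} {n} (a b : 'rV[R]_n) (p q : R) :
  0 <= p ^+ 2 * dotp a a - 2 * p * q * dotp a b + q ^+ 2 * dotp b b.
Proof.
have -> : p ^+ 2 * dotp a a - 2 * p * q * dotp a b + q ^+ 2 * dotp b b =
  \sum_(i < n) (p * a ord0 i - q * b ord0 i) ^+ 2.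
  rewrite /dotp !mulr_sumr -sumrN -!big_split /=; apply: eq_bigr => i _.
  by rewrite sqrrB; ring.
by apply: sumr_ge0 => i _; rewrite sqr_ge0.
Qed.

Lemma dotp0 {R : realType} {n} (a b : 'rV[R]_n) : dotp a a = 0 -> dotp a b = 0.
Proof.
move=> h.
have h2 : forall i, a ord0 i * a ord0 i = 0.
  move=> i; move/eqP: h; rewrite /dotp psumr_eq0; last first.
    by move=> j _; rewrite -expr2 sqr_ge0.
  by move/allP => /(_ i (mem_index_enum _)) /= /eqP.
rewrite /dotp big1 // => i _.
have := h2 i; move/eqP; rewrite mulf_eq0 orbb => /eqP ->; by rewrite mul0r.
Qed.

Lemma dotpC {R : realType} {n} (a b : 'rV[R]_n) : dotp b a = dotp a b.
Proof. by rewrite /dotp; apply: eq_bigr => i _; rewrite mulrC. Qed.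

Lemma dotp_CS {R : realType} {n} (a b : 'rV[R]_n) :
  dotp a b <= enorm a * enorm b.
Proof.
rewrite /enorm.
have ha := dotp_ge0 a; have hb := dotp_ge0 b.
set A := Num.sqrt (dotp a a); set B := Num.sqrt (dotp b b).
have hA : A ^+ 2 = dotp a a by rewrite sqr_sqrtr.
have hB : B ^+ 2 = dotp b b by rewrite sqr_sqrtr.
have A0 : 0 <= A by apply: sqrtr_ge0.
have B0 : 0 <= B by apply: sqrtr_ge0.
have [Az|Ap] := eqVneq A 0.
  have : dotp a a = 0 by rewrite -hA Az expr0n.
  by move/(dotp0 a b) ->; rewrite Az mul0r.
have [Bz|Bp] := eqVneq B 0.
  have : dotp b b = 0 by rewrite -hB Bz expr0n.
  by move/(dotp0 b a); rewrite dotpC => ->; rewrite Bz mulr0.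
have AB : 0 < A * B by rewrite mulr_gt0 // lt0r ?Ap ?Bp.
have := dotp_quad a b B A.
rewrite -hA -hB => q.
have : A * B * dotp a b <= A * B * (A * B).
  have : 2 * (A * B * dotp a b) <= 2 * (A * B * (A * B)) by lra.
  by rewrite ler_pM2l.
by rewrite ler_pM2l.
Qed.

Lemma enorm_triangle {R : realType} {n} (a b : 'rV[R]_n) :
  enorm (a + b) <= enorm a + enorm b.
Proof.
have e : dotp (a + b) (a + b) = dotp a a + 2 * dotp a b + dotp b b.
  rewrite /dotp mulr_sumr -!big_split /=; apply: eq_bigr => i _.
  rewrite !mxE; ring.
have cs := dotp_CS a b.
have hA : enorm a ^+ 2 = dotp a a by rewrite sqr_sqrtr // dotp_ge0.
have hB : enorm b ^+ 2 = dotp b b by rewrite sqr_sqrtr // dotp_ge0.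
have A0 : 0 <= enorm a by apply: sqrtr_ge0.
have B0 : 0 <= enorm b by apply: sqrtr_ge0.
rewrite {1}/enorm e -(ger0_norm (addr_ge0 A0 B0)) -sqrtr_sqr.
apply: ler_wsqrtr; rewrite -hA -hB; lra.
Qed.

Lemma inball_trans {R : realType} {n} (xb x y : 'rV[R]_n) (e1 e2 : R) :
  inball xb e2 x -> inball x (e1 - e2) y -> inball xb e1 y.
Proof.
rewrite /inball => h1 h2.
have -> : y - xb = (y - x) + (x - xb) by rewrite addrA subrK.
apply: le_lt_trans (enorm_triangle _ _) _.
have -> : e1 = (e1 - e2) + e2 by rewrite subrK.
exact: ltrD.
Qed.

Theorem proposition3p3 (R : realType) (n : nat) (f : 'rV[R]_n -> \bar R)
    (xb vb : 'rV[R]_n) (eps1 eps2 : R) :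
  proper_fun f -> lsc f -> limiting_subgrad f xb vb ->
  0 < eps2 -> eps2 < eps1 ->
  (forall x v, gphT f eps2 xb vb x v ->
     forall xt vt, gphT f (eps1 - eps2) x v xt vt -> gphT f eps1 xb vb xt vt)
  /\
  (forall s : R, var_convex_radius f s xb vb eps1 ->
     forall x v, gphT f eps2 xb vb x v -> var_convex_radius f s x v (eps1 - eps2)).
Proof.
move=> _ _ [fxb _] e2p e21.
have part1 : forall x v, gphT f eps2 xb vb x v ->
     forall xt vt, gphT f (eps1 - eps2) x v xt vt -> gphT f eps1 xb vb xt vt.
  move=> x v [[fx _] [hx [hv hf]]] xt vt [hl [hxt [hvt hft]]].
  split => //; split; first exact: inball_trans hx hxt.
  split; first exact: inball_trans hv hvt.
  move: fx fxb hf hft; case: (f x) => // a _; case: (f xb) => // b _.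
  rewrite -!EFinD !lte_fin => h1 h2.
  apply: (lt_le_trans h2); rewrite lee_fin; lra.
split => // s hs x v hxv xt vt ht x' hx'.
apply: hs; first exact: part1 hxv _ _ ht.
by case: hxv => _ [hx _]; apply: inball_trans hx hx'.
Qed.
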